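(* Consider a stationary memoryless discrete source over a finite alphabet $A$ with $|A|\geq 2$ and symbol distribution $P$. Assume every symbol probability is positive and less than $1$. Let $\rho$ be the reciprocal of the smallest symbol probability, so that $\rho>1$. Let $T$ be a Tunstall parse tree with $n$ leaves, and suppose $$\log_2 n-c(\rho)>0,\qquad\text{where } c(\rho)=\left(\frac{\rho\ln\rho}{\rho-1}-1-\ln\frac{\rho\ln\rho}{\rho-1}\right)\frac{1}{\ln 2}.$$ Then the compression rate $R=\lceil\log_2 n\rceil/E[L]$ of the corresponding variable-to-fixed length code, in which each leaf is encoded by a binary codeword of length $\lceil\log_2 n\rceil$, satisfies $$R\leq\frac{\lceil\log_2 n\rceil\,H(P)}{\log_2 n-c(\rho)}.$$
   Context: A parse tree is a complete $|A|$-ary tree whose edges are labeled by source symbols. Each leaf corresponds to a source segment, namely the string of labels on its root-to-leaf path. The probability of a leaf is the product of the probabilities of its labels. A Tunstall parse tree is obtained by starting from the tree whose root has one child per symbol of $A$, and then repeatedly replacing a leaf of maximum probability by an internal node with $|A|$ children. Here $n$ is the number of leaves obtained after some number of such expansions. $L$ is the length (depth) of the random source segment parsed, i.e., of the leaf reached by the source. $H(P)$ is the source entropy in bits. *)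

(* Defs.v *)
From Stdlib Require Import Reals Lra List.
Import ListNotations.
Open Scope R_scope.

(* Alphabet A = {0, ..., k-1}; a source symbol is a nat a < k;
   P : nat -> R gives the symbol probabilities (only values on a < k matter). *)

Definition word_prob (P : nat -> R) (w : list nat) : R :=
  fold_right (fun a r => P a * r) 1 w.

(* A parse tree is represented by its list of leaves (each leaf = the word
   labelling its root-to-leaf path). *)
Definition children (k : nat) (w : list nat) : list (list nat) :=
  map (fun a => w ++ [a]) (seq 0 k).

Inductive tunstall (k : nat) (P : nat -> R) : list (list nat) -> Prop :=
| tunstall_init : tunstall k P (map (fun a => [a]) (seq 0 k))
| tunstall_step : forall l1 w l2,
    tunstall k P (l1 ++ w :: l2) ->
    (forall v, In v (l1 ++ w :: l2) -> word_prob P v <= word_prob P w) ->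
    tunstall k P (l1 ++ l2 ++ children k w).

Definition expected_length (P : nat -> R) (leaves : list (list nat)) : R :=
  fold_right (fun w r => word_prob P w * INR (length w) + r) 0 leaves.

Definition log2 (x : R) : R := ln x / ln 2.

Definition entropy (k : nat) (P : nat -> R) : R :=
  - fold_right (fun a r => P a * log2 (P a) + r) 0 (seq 0 k).

(* Ceiling: Int_part is the floor function. *)
Definition Rceil (x : R) : R := IZR (- Int_part (- x)).

Definition pmin (k : nat) (P : nat -> R) : R :=
  fold_right Rmin (P 0%nat) (map P (seq 0 k)).

Definition c_rho (rho : R) : R :=
  (rho * ln rho / (rho - 1) - 1 - ln (rho * ln rho / (rho - 1))) * (1 / ln 2).

(* Main.v *)
Require Import Defs.
From Stdlib Require Import Reals List Lra Psatz.
Import ListNotations.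
Open Scope R_scope.

Fixpoint gsum {A} (f : A -> R) (l : list A) : R :=
  match l with nil => 0 | x :: t => f x + gsum f t end.

Lemma gsum_fold {A} (f : A -> R) l :
  fold_right (fun x r => f x + r) 0 l = gsum f l.
Proof. induction l; simpl; auto. rewrite IHl; auto. Qed.

Lemma gsum_app {A} (f : A -> R) l1 l2 : gsum f (l1 ++ l2) = gsum f l1 + gsum f l2.
Proof. induction l1; simpl; [ring| rewrite IHl1; ring]. Qed.

Lemma gsum_map {A B} (f : B -> R) (g : A -> B) l :
  gsum f (map g l) = gsum (fun x => f (g x)) l.
Proof. induction l; simpl; [ring| rewrite IHl; ring]. Qed.

Lemma gsum_ext_in {A} (f g : A -> R) l :
  (forall x, In x l -> f x = g x) -> gsum f l = gsum g l.
Proof.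
  induction l; simpl; intros H; auto.
  rewrite H by auto. rewrite IHl; auto.
Qed.

Lemma gsum_plus {A} (f g : A -> R) l :
  gsum (fun x => f x + g x) l = gsum f l + gsum g l.
Proof. induction l; simpl; [ring| rewrite IHl; ring]. Qed.

Lemma gsum_scal {A} (c : R) (f : A -> R) l :
  gsum (fun x => c * f x) l = c * gsum f l.
Proof. induction l; simpl; [ring| rewrite IHl; ring]. Qed.

Lemma gsum_opp {A} (f : A -> R) l :
  gsum (fun x => - f x) l = - gsum f l.
Proof. induction l; simpl; [ring| rewrite IHl; ring]. Qed.

Lemma gsum_le {A} (f g : A -> R) l :
  (forall x, In x l -> f x <= g x) -> gsum f l <= gsum g l.
Proof.
  induction l; simpl; intros H; [lra|].
  assert (f a <= g a) by auto. assert (gsum f l <= gsum g l) by auto. lra.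
Qed.

Lemma gsum_const {A} (c : R) (l : list A) : gsum (fun _ => c) l = c * INR (length l).
Proof.
  induction l; simpl length; [simpl; ring|]. rewrite S_INR. simpl. rewrite IHl; ring.
Qed.

Lemma fold_min_le (x0 y : R) l : In y l -> fold_right Rmin x0 l <= y.
Proof.
  induction l; simpl; [tauto|]. intros [<-|H].
  - apply Rmin_l.
  - eapply Rle_trans; [apply Rmin_r| auto].
Qed.

Lemma fold_min_le0 (x0 : R) l : fold_right Rmin x0 l <= x0.
Proof.
  induction l; simpl; [lra|]. eapply Rle_trans; [apply Rmin_r| auto].
Qed.

Lemma fold_min_pos (x0 : R) l : 0 < x0 -> (forall y, In y l -> 0 < y) ->
  0 < fold_right Rmin x0 l.
Proof.
  induction l; simpl; intros H0 H; auto. apply Rmin_pos; auto.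
Qed.

Lemma ln_le_sub1 z : 0 < z -> ln z <= z - 1.
Proof.
  intros Hz. pose proof (exp_ineq1_le (ln z)). rewrite exp_ln in H; lra.
Qed.

Lemma wp_fold P w c :
  fold_right (fun a r => P a * r) c w = word_prob P w * c.
Proof. induction w; unfold word_prob in *; simpl; [ring| rewrite IHw; ring]. Qed.

Lemma wp_snoc P w a : word_prob P (w ++ [a]) = word_prob P w * P a.
Proof.
  unfold word_prob at 1. rewrite fold_right_app. simpl. rewrite wp_fold. ring.
Qed.

Definition Hn k P := - gsum (fun a => P a * ln (P a)) (seq 0 k).

Lemma chord x rho : 1 <= x <= rho -> 1 < rho ->
  x * ln x <= rho * ln rho / (rho - 1) * (x - 1).
Proof.
  intros [H1 H2] Hr.
  assert (tang : forall y, 0 < y -> y * ln x + y - x <= y * ln y).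
  { intros y Hy. pose proof (ln_le_sub1 (x / y)).
    unfold Rdiv in H. rewrite ln_mult in H by (try apply Rinv_0_lt_compat; lra).
    rewrite ln_Rinv in H by lra.
    assert (0 < x / y) by (apply Rdiv_lt_0_compat; lra). unfold Rdiv in H0.
    specialize (H H0).
    assert (y * (ln x + - ln y) <= y * (x * / y - 1)) by (apply Rmult_le_compat_l; lra).
    replace (y * (x * / y - 1)) with (x - y) in H3 by (field; lra). lra. }
  pose proof (tang 1 ltac:(lra)) as T1. rewrite ln_1 in T1.
  pose proof (tang rho ltac:(lra)) as T2.
  apply Rmult_le_reg_l with (rho - 1); [lra|].
  replace ((rho - 1) * (rho * ln rho / (rho - 1) * (x - 1)))
    with ((x - 1) * (rho * ln rho)) by (field; lra).
  assert (A1 : (rho - x) * (1 * ln x + 1 - x) <= (rho - x) * (1 * 0))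
    by (apply Rmult_le_compat_l; lra).
  assert (A2 : (x - 1) * (rho * ln x + rho - x) <= (x - 1) * (rho * ln rho))
    by (apply Rmult_le_compat_l; lra).
  nra.
Qed.

Lemma pointwise p a rho : 0 < a -> 1 < rho -> a <= p <= rho * a ->
  p * ln p <= p * (ln a + rho * ln rho / (rho - 1)) - a * (rho * ln rho / (rho - 1)).
Proof.
  intros Ha Hr Hp.
  set (x := p / a).
  assert (Hx : p = a * x) by (unfold x; field; lra).
  assert (1 <= x <= rho).
  { unfold x; split.
    - apply Rmult_le_reg_r with a; auto. unfold Rdiv. rewrite Rmult_assoc, Rinv_l; lra.
    - apply Rmult_le_reg_r with a; auto. unfold Rdiv. rewrite Rmult_assoc, Rinv_l; lra. }
  pose proof (chord x rho H Hr).
  rewrite Hx, ln_mult by lra.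
  set (t := rho * ln rho / (rho - 1)) in *.
  assert (a * (x * ln x) <= a * (t * (x - 1))) by (apply Rmult_le_compat_l; lra).
  nra.
Qed.

Lemma Rdiv_le_0_compat' x y : 0 <= x -> 0 < y -> 0 <= x / y.
Proof. intros. unfold Rdiv. apply Rmult_le_pos; [auto| left; apply Rinv_0_lt_compat; auto]. Qed.

Section Inv.
Variables (k : nat) (P : nat -> R).
Hypothesis Hk : (2 <= k)%nat.
Hypothesis HP : forall a, (a < k)%nat -> 0 < P a < 1.
Hypothesis Hs : gsum P (seq 0 k) = 1.

Lemma pmin_le a : (a < k)%nat -> pmin k P <= P a.
Proof.
  intros H. unfold pmin. apply fold_min_le. apply in_map. apply in_seq. lia.
Qed.

Lemma pmin_pos : 0 < pmin k P.
Proof.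
  unfold pmin. apply fold_min_pos. apply HP; lia.
  intros y Hy. apply in_map_iff in Hy as [a [<- Ha]]. apply in_seq in Ha. apply HP; lia.
Qed.

Lemma pmin_lt1 : pmin k P < 1.
Proof.
  eapply Rle_lt_trans; [apply fold_min_le0|]. apply HP; lia.
Qed.

Definition Inv (leaves : list (list nat)) :=
  (forall w, In w leaves -> 0 < word_prob P w) /\
  gsum (word_prob P) leaves = 1 /\
  gsum (fun w => - (word_prob P w * ln (word_prob P w))) leaves =
    gsum (fun w => word_prob P w * INR (length w)) leaves * Hn k P /\
  (exists m, forall v, In v leaves -> pmin k P * m <= word_prob P v <= m).

Lemma ch_prob w : gsum (word_prob P) (children k w) = word_prob P w.
Proof.
  unfold children. rewrite gsum_map.
  rewrite (gsum_ext_in _ (fun a => word_prob P w * P a)).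
  2:{ intros; apply wp_snoc. }
  rewrite gsum_scal, Hs; ring.
Qed.

Lemma ch_len w : gsum (fun v => word_prob P v * INR (length v)) (children k w) =
  word_prob P w * (INR (length w) + 1).
Proof.
  unfold children. rewrite gsum_map.
  rewrite (gsum_ext_in _ (fun a => (word_prob P w * (INR (length w) + 1)) * P a)).
  2:{ intros. rewrite wp_snoc, length_app, plus_INR. simpl. ring. }
  rewrite gsum_scal, Hs; ring.
Qed.

Lemma ch_ent w : 0 < word_prob P w ->
  gsum (fun v => - (word_prob P v * ln (word_prob P v))) (children k w) =
  - (word_prob P w * ln (word_prob P w)) + word_prob P w * Hn k P.
Proof.
  intros Hw. unfold children. rewrite gsum_map.
  rewrite (gsum_ext_in _ (fun a => (- (word_prob P w * ln (word_prob P w))) * P a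
                                  + word_prob P w * (- (P a * ln (P a))))).
  2:{ intros a Ha. apply in_seq in Ha. rewrite wp_snoc, ln_mult; [ring|lra|apply HP; lia]. }
  rewrite gsum_plus, !gsum_scal, gsum_opp, Hs. unfold Hn. ring.
Qed.

Lemma inv_tunstall leaves : tunstall k P leaves -> Inv leaves.
Proof.
  induction 1 as [| l1 w l2 Ht IH Hmax].
  - unfold Inv. split; [|split; [|split]].
    + intros w Hw. apply in_map_iff in Hw as [a [<- Ha]]. apply in_seq in Ha.
      unfold word_prob; simpl. rewrite Rmult_1_r. apply HP; lia.
    + rewrite gsum_map. unfold word_prob; simpl.
      rewrite (gsum_ext_in _ P) by (intros; ring). auto.
    + rewrite !gsum_map. unfold word_prob; simpl.
      rewrite (gsum_ext_in (fun x => - (P x * 1 * ln (P x * 1))) (fun a => - (P a * ln (P a))))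
        by (intros; rewrite Rmult_1_r; ring).
      rewrite (gsum_ext_in (fun x => P x * 1 * 1) P) by (intros; ring).
      rewrite gsum_opp, Hs. unfold Hn. ring.
    + exists 1. intros v Hv. apply in_map_iff in Hv as [a [<- Ha]]. apply in_seq in Ha.
      unfold word_prob; simpl. rewrite !Rmult_1_r. split; [apply pmin_le; lia|].
      pose proof (HP a ltac:(lia)); lra.
  - destruct IH as [Hpos [Hsum [Hent [m Hm]]]].
    assert (Hw : 0 < word_prob P w) by (apply Hpos; apply in_app_iff; simpl; auto).
    assert (Hin : forall v, In v (l1 ++ l2) -> In v (l1 ++ w :: l2)).
    { intros v Hv. apply in_app_iff in Hv as [Hv|Hv]; apply in_app_iff; simpl; auto. }
    assert (Hch : forall v, In v (children k w) -> exists a, (a < k)%nat /\ v = w ++ [a]).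
    { intros v Hv. unfold children in Hv. apply in_map_iff in Hv as [a [<- Ha]].
      apply in_seq in Ha. exists a; split; [lia|auto]. }
    unfold Inv. split; [|split; [|split]].
    + intros v Hv. rewrite app_assoc in Hv. apply in_app_iff in Hv as [Hv|Hv]; auto.
      destruct (Hch v Hv) as [a [Ha ->]]. rewrite wp_snoc.
      apply Rmult_lt_0_compat; auto. apply HP; auto.
    + rewrite !gsum_app in *. simpl in Hsum. rewrite ch_prob. lra.
    + rewrite !gsum_app in *. simpl in Hent. rewrite ch_ent, ch_len by auto. lra.
    + exists (word_prob P w). intros v Hv.
      assert (Hwm := Hm w ltac:(apply in_app_iff; simpl; auto)).
      pose proof pmin_pos.
      rewrite app_assoc in Hv. apply in_app_iff in Hv as [Hv|Hv].
      * specialize (Hin v Hv). split; [|apply Hmax; auto].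
        specialize (Hm v Hin). nra.
      * destruct (Hch v Hv) as [a [Ha ->]]. rewrite wp_snoc.
        pose proof (HP a Ha). pose proof (pmin_le a Ha). split; nra.
Qed.

End Inv.

Theorem theorem4 (k : nat) (P : nat -> R) (leaves : list (list nat)) :
  (2 <= k)%nat ->
  (forall a, (a < k)%nat -> 0 < P a < 1) ->
  fold_right (fun a r => P a + r) 0 (seq 0 k) = 1 ->
  tunstall k P leaves ->
  let n := INR (length leaves) in
  let rho := / pmin k P in
  log2 n - c_rho rho > 0 ->
  Rceil (log2 n) / expected_length P leaves
    <= Rceil (log2 n) * entropy k P / (log2 n - c_rho rho).
Proof.
  intros Hk HP Hs0 Ht n rho HD.
  rewrite (gsum_fold P) in Hs0.
  destruct (inv_tunstall k P Hk HP Hs0 leaves Ht) as [Hpos [Hsum [Hent [m Hm]]]].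
  pose proof (pmin_pos k P Hk HP) as Hpm0.
  pose proof (pmin_lt1 k P Hk HP) as Hpm1.
  set (pm := pmin k P) in *.
  assert (Hrho : 1 < rho).
  { unfold rho. assert (/ pm * pm = 1) by (field; lra).
    assert (0 < / pm) by (apply Rinv_0_lt_compat; lra). nra. }
  assert (Hln2 : 0 < ln 2).
  { rewrite <- ln_1. apply ln_increasing; lra. }
  assert (Hlnr : 0 < ln rho).
  { rewrite <- ln_1. apply ln_increasing; lra. }
  assert (Hne : exists w0 ls, leaves = w0 :: ls).
  { destruct leaves as [|w0 ls]; [simpl in Hsum; lra| eauto]. }
  destruct Hne as [w0 [ls Hl]].
  assert (Hn0 : 0 < n).
  { unfold n; rewrite Hl; simpl length; rewrite S_INR; pose proof (pos_INR (length ls)); lra. }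
  assert (Hm0 : 0 < m).
  { assert (In w0 leaves) by (rewrite Hl; simpl; auto).
    pose proof (Hpos w0 H). pose proof (Hm w0 H). lra. }
  set (a := pm * m).
  assert (Ha : 0 < a) by (unfold a; nra).
  assert (Hra : rho * a = m) by (unfold rho, a; field; lra).
  set (t := rho * ln rho / (rho - 1)).
  assert (Ht0 : 0 < t) by (unfold t; apply Rdiv_lt_0_compat; [apply Rmult_lt_0_compat|]; lra).
  assert (Hkey : gsum (fun w => word_prob P w * ln (word_prob P w)) leaves
             <= ln a + t - a * t * n).
  { eapply Rle_trans.
    - apply gsum_le with (g := fun w => (ln a + t) * word_prob P w + (- (a * t)) * 1).
      intros v Hv. pose proof (Hm v Hv). pose proof (pointwise (word_prob P v) a rho Ha Hrho).
      fold t in H0. assert (a <= word_prob P v <= rho * a) by (rewrite Hra; unfold a; lra).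
      specialize (H0 H1). lra.
    - rewrite gsum_plus, !gsum_scal, Hsum, gsum_const. fold n. lra. }
  assert (Hlog : ln n + ln a + ln t <= n * a * t - 1).
  { pose proof (Rmult_lt_0_compat _ _ Hn0 Ha) as Hna. rewrite <- (ln_mult n a Hn0 Ha). rewrite <- (ln_mult (n*a) t Hna Ht0). apply ln_le_sub1. exact (Rmult_lt_0_compat _ _ Hna Ht0). }
  assert (Hc0 : 0 <= t - 1 - ln t) by (pose proof (ln_le_sub1 t Ht0); lra).
  set (E := expected_length P leaves).
  assert (HE : E = gsum (fun w => word_prob P w * INR (length w)) leaves)
    by (unfold E, expected_length; apply gsum_fold).
  assert (Hentr : entropy k P = Hn k P / ln 2).
  { unfold entropy, Hn. rewrite gsum_fold.
    rewrite (gsum_ext_in _ (fun a => / ln 2 * (P a * ln (P a)))).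
    2:{ intros; unfold log2, Rdiv; ring. }
    rewrite gsum_scal. unfold Rdiv; ring. }
  assert (HH0 : 0 <= Hn k P).
  { unfold Hn. assert (gsum (fun a => P a * ln (P a)) (seq 0 k) <= gsum (fun _ => 0) (seq 0 k)).
    { apply gsum_le. intros x Hx. apply in_seq in Hx. pose proof (HP x ltac:(lia)).
      assert (ln (P x) < 0) by (rewrite <- ln_1; apply ln_increasing; lra). nra. }
    rewrite gsum_const in H. lra. }
  rewrite gsum_opp in Hent. rewrite <- HE in Hent.
  assert (HDform : log2 n - c_rho rho = (ln n - (t - 1 - ln t)) / ln 2).
  { unfold log2, c_rho. fold t. field. lra. }
  assert (Hbound : log2 n - c_rho rho <= E * entropy k P).
  { rewrite HDform, Hentr. unfold Rdiv. rewrite <- Rmult_assoc.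
    apply Rmult_le_compat_r. left; apply Rinv_0_lt_compat; lra. nra. }
  set (D := log2 n - c_rho rho) in *.
  set (H := entropy k P) in *.
  assert (HH : 0 <= H) by (rewrite Hentr; apply Rdiv_le_0_compat'; lra).
  assert (HC : 0 <= Rceil (log2 n)).
  { unfold Rceil. rewrite opp_IZR. pose proof (base_Int_part (- log2 n)).
    assert (0 <= c_rho rho) by (unfold c_rho; fold t; apply Rmult_le_pos; [exact Hc0| left; apply Rdiv_lt_0_compat; lra]).
    unfold D in HD. lra. }
  assert (HE0 : 0 < E).
  { destruct (Rle_lt_dec E 0); auto. nra. }
  set (C := Rceil (log2 n)) in *.
  assert (Hdiff : H / D - / E = (E * H - D) / (E * D)) by (field; lra).
  assert (0 <= (E * H - D) / (E * D)) by (apply Rdiv_le_0_compat'; nra).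
  assert (0 <= C * (H / D - / E)) by (apply Rmult_le_pos; lra).
  unfold Rdiv in *. nra.
Qed.
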